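(* Let $\mathcal V$ be any subvariety of the variety of $\mathsf{FL}_{ew}$-algebras. Then the class of the $0$-free subreducts of algebras in $\mathcal V$ (i.e. subalgebras of the reducts to the signature $\{\vee,\wedge,\cdot,\to,1\}$) is a variety.
   Context: An $\mathsf{FL}_{ew}$-algebra is an algebra $\langle A,\vee,\wedge,\cdot,\to,0,1\rangle$ such that $\langle A,\vee,\wedge\rangle$ is a lattice with least element $0$ and greatest element $1$, $\langle A,\cdot,1\rangle$ is a commutative monoid, and $a\cdot b\le c$ iff $a\le b\to c$ for all $a,b,c$. *)

(* Defs.v *)
Record Alg6 : Type := {
  car6 :> Type;
  join6 : car6 -> car6 -> car6;
  meet6 : car6 -> car6 -> car6;
  mul6  : car6 -> car6 -> car6;
  imp6  : car6 -> car6 -> car6;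
  zero6 : car6;
  one6  : car6 }.

Record Alg5 : Type := {
  car5 :> Type;
  join5 : car5 -> car5 -> car5;
  meet5 : car5 -> car5 -> car5;
  mul5  : car5 -> car5 -> car5;
  imp5  : car5 -> car5 -> car5;
  one5  : car5 }.

Definition le6 (A : Alg6) (x y : A) : Prop := join6 A x y = y.

Definition is_FLew (A : Alg6) : Prop :=
  (forall x y, join6 A x y = join6 A y x) /\
  (forall x y, meet6 A x y = meet6 A y x) /\
  (forall x y z, join6 A x (join6 A y z) = join6 A (join6 A x y) z) /\
  (forall x y z, meet6 A x (meet6 A y z) = meet6 A (meet6 A x y) z) /\
  (forall x y, join6 A x (meet6 A x y) = x) /\
  (forall x y, meet6 A x (join6 A x y) = x) /\
  (forall x, le6 A (zero6 A) x) /\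
  (forall x, le6 A x (one6 A)) /\
  (forall x y z, mul6 A x (mul6 A y z) = mul6 A (mul6 A x y) z) /\
  (forall x y, mul6 A x y = mul6 A y x) /\
  (forall x, mul6 A x (one6 A) = x) /\
  (forall a b c, le6 A (mul6 A a b) c <-> le6 A a (imp6 A b c)).

Definition hom6 (A B : Alg6) (f : A -> B) : Prop :=
  (forall x y, f (join6 A x y) = join6 B (f x) (f y)) /\
  (forall x y, f (meet6 A x y) = meet6 B (f x) (f y)) /\
  (forall x y, f (mul6 A x y) = mul6 B (f x) (f y)) /\
  (forall x y, f (imp6 A x y) = imp6 B (f x) (f y)) /\
  f (zero6 A) = zero6 B /\
  f (one6 A) = one6 B.

Definition hom5 (A B : Alg5) (f : A -> B) : Prop :=
  (forall x y, f (join5 A x y) = join5 B (f x) (f y)) /\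
  (forall x y, f (meet5 A x y) = meet5 B (f x) (f y)) /\
  (forall x y, f (mul5 A x y) = mul5 B (f x) (f y)) /\
  (forall x y, f (imp5 A x y) = imp5 B (f x) (f y)) /\
  f (one5 A) = one5 B.

Definition injective {X Y : Type} (f : X -> Y) : Prop :=
  forall x y, f x = f y -> x = y.
Definition surjective {X Y : Type} (f : X -> Y) : Prop :=
  forall y, exists x, f x = y.

Definition prod6 (I : Type) (F : I -> Alg6) : Alg6 := {|
  car6 := forall i, F i;
  join6 := fun x y i => join6 (F i) (x i) (y i);
  meet6 := fun x y i => meet6 (F i) (x i) (y i);
  mul6  := fun x y i => mul6 (F i) (x i) (y i);
  imp6  := fun x y i => imp6 (F i) (x i) (y i);
  zero6 := fun i => zero6 (F i);
  one6  := fun i => one6 (F i) |}.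

Definition prod5 (I : Type) (F : I -> Alg5) : Alg5 := {|
  car5 := forall i, F i;
  join5 := fun x y i => join5 (F i) (x i) (y i);
  meet5 := fun x y i => meet5 (F i) (x i) (y i);
  mul5  := fun x y i => mul5 (F i) (x i) (y i);
  imp5  := fun x y i => imp5 (F i) (x i) (y i);
  one5  := fun i => one5 (F i) |}.

Definition variety6 (K : Alg6 -> Prop) : Prop :=
  (forall (A B : Alg6) (f : A -> B), K A -> hom6 A B f -> surjective f -> K B) /\
  (forall (A B : Alg6) (f : B -> A), K A -> hom6 B A f -> injective f -> K B) /\
  (forall (I : Type) (F : I -> Alg6), (forall i, K (F i)) -> K (prod6 I F)).

Definition variety5 (K : Alg5 -> Prop) : Prop :=
  (forall (A B : Alg5) (f : A -> B), K A -> hom5 A B f -> surjective f -> K B) /\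
  (forall (A B : Alg5) (f : B -> A), K A -> hom5 B A f -> injective f -> K B) /\
  (forall (I : Type) (F : I -> Alg5), (forall i, K (F i)) -> K (prod5 I F)).

Definition reduct (A : Alg6) : Alg5 := {|
  car5 := A; join5 := join6 A; meet5 := meet6 A; mul5 := mul6 A;
  imp5 := imp6 A; one5 := one6 A |}.

Definition zero_free_subreducts (V : Alg6 -> Prop) (B : Alg5) : Prop :=
  exists A : Alg6, V A /\ exists f : B -> reduct A, hom5 B (reduct A) f /\ injective f.

(* Main.v *)
Require Import Defs.
From Stdlib Require Import ClassicalEpsilon FunctionalExtensionality PropExtensionality ProofIrrelevance.

Definition Qt (X : Type) (R : X -> X -> Prop) : Type := {P : X -> Prop | exists a, P = R a}.
Definition cls {X : Type} (R : X -> X -> Prop) (a : X) : Qt X R :=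
  exist _ (R a) (ex_intro _ a eq_refl).
Definition rep {X : Type} {R : X -> X -> Prop} (q : Qt X R) : X :=
  proj1_sig (constructive_indefinite_description _ (proj2_sig q)).

Lemma sig_eq_pr {X : Type} (P : X -> Prop) (x y : {p | P p}) :
  proj1_sig x = proj1_sig y -> x = y.
Proof.
  destruct x as [x Hx], y as [y Hy]; simpl; intro E; subst y.
  f_equal; apply proof_irrelevance.
Qed.

Lemma cls_rep {X : Type} (R : X -> X -> Prop) (q : Qt X R) : cls R (rep q) = q.
Proof.
  apply sig_eq_pr. unfold rep, cls. simpl.
  destruct (constructive_indefinite_description _ (proj2_sig q)) as [a Ha]. simpl.
  symmetry; exact Ha.
Qed.

Lemma cls_eq {X : Type} (R : X -> X -> Prop)
  (Hs : forall a b, R a b -> R b a) (Ht : forall a b c, R a b -> R b c -> R a c)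
  a b : R a b -> cls R a = cls R b.
Proof.
  intro Hab. apply sig_eq_pr. simpl.
  apply functional_extensionality; intro x. apply propositional_extensionality; split; intro H; eauto.
Qed.

Lemma cls_inv {X : Type} (R : X -> X -> Prop)
  (Hr : forall a, R a a) (Hs : forall a b, R a b -> R b a)
  a b : cls R a = cls R b -> R a b.
Proof.
  intro E. apply (f_equal (@proj1_sig _ _)) in E. simpl in E.
  apply Hs. rewrite <- E. apply Hr.
Qed.

Definition qalg (A : Alg6) (R : A -> A -> Prop) : Alg6 := {|
  car6 := Qt A R;
  join6 := fun p q => cls R (join6 A (rep p) (rep q));
  meet6 := fun p q => cls R (meet6 A (rep p) (rep q));
  mul6 := fun p q => cls R (mul6 A (rep p) (rep q));
  imp6 := fun p q => cls R (imp6 A (rep p) (rep q));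
  zero6 := cls R (zero6 A);
  one6 := cls R (one6 A) |}.

Lemma qalg_hom (A : Alg6) (R : A -> A -> Prop)
  (Hr : forall a, R a a) (Hs : forall a b, R a b -> R b a)
  (Ht : forall a b c, R a b -> R b c -> R a c)
  (Cj : forall a b a' b', R a b -> R a' b' -> R (join6 A a a') (join6 A b b'))
  (Cm : forall a b a' b', R a b -> R a' b' -> R (meet6 A a a') (meet6 A b b'))
  (Cu : forall a b a' b', R a b -> R a' b' -> R (mul6 A a a') (mul6 A b b'))
  (Ci : forall a b a' b', R a b -> R a' b' -> R (imp6 A a a') (imp6 A b b')) :
  hom6 A (qalg A R) (cls R) /\ surjective (cls R).
Proof.
  assert (Rr : forall x, R x (rep (cls R x))).
  { intro x. apply Hs. apply cls_inv; auto. apply cls_rep. }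
  split.
  - repeat split; intros; simpl; apply cls_eq; auto.
  - intro q. exists (rep q). apply cls_rep.
Qed.

Section dummy. End dummy.

Ltac dflew H := destruct H as (jc & mc & ja & ma & ab1 & ab2 & z0 & o1 & mA & mC & m1 & res).

Lemma fl_refl A (H : is_FLew A) x : le6 A x x.
Proof. dflew H. unfold le6.
  transitivity (join6 A x (meet6 A x (join6 A x x))). f_equal. symmetry; apply ab2. apply ab1. Qed.

Lemma fl_antisym A (H : is_FLew A) x y : le6 A x y -> le6 A y x -> x = y.
Proof. dflew H. unfold le6. intros H1 H2. rewrite <- H2, jc. exact H1. Qed.

Lemma fl_trans A (H : is_FLew A) x y z : le6 A x y -> le6 A y z -> le6 A x z.
Proof. dflew H. unfold le6. intros H1 H2. rewrite <- H2, ja, H1. reflexivity. Qed.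

Lemma fl_join_l A (H : is_FLew A) x y : le6 A x (join6 A x y).
Proof. pose proof (fl_refl A H x) as R. dflew H. unfold le6 in *. rewrite ja, R. reflexivity. Qed.

Lemma fl_join_r A (H : is_FLew A) x y : le6 A y (join6 A x y).
Proof. pose proof (fl_join_l A H y x) as R. dflew H. rewrite jc. exact R. Qed.

Lemma fl_lub A (H : is_FLew A) x y z : le6 A x z -> le6 A y z -> le6 A (join6 A x y) z.
Proof. dflew H. unfold le6. intros H1 H2. rewrite <- ja, H2, H1. reflexivity. Qed.

Lemma fl_le_meet A (H : is_FLew A) z x : le6 A z x <-> meet6 A z x = z.
Proof. dflew H. unfold le6. split; intro E.
  - rewrite <- E. apply ab2.
  - rewrite <- E, jc, mc. apply ab1. Qed.

Lemma fl_meet_l A (H : is_FLew A) x y : le6 A (meet6 A x y) x.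
Proof. dflew H. unfold le6. rewrite jc. apply ab1. Qed.

Lemma fl_meet_r A (H : is_FLew A) x y : le6 A (meet6 A x y) y.
Proof. pose proof (fl_meet_l A H y x) as R. dflew H. rewrite mc. exact R. Qed.

Lemma fl_glb A (H : is_FLew A) z x y : le6 A z x -> le6 A z y -> le6 A z (meet6 A x y).
Proof. intros H1 H2. apply (fl_le_meet A H) in H1. apply (fl_le_meet A H) in H2.
  apply (fl_le_meet A H). pose proof H as H'. dflew H'. rewrite ma, H1, H2. reflexivity. Qed.

Lemma fl_mono_l A (H : is_FLew A) a b c : le6 A a b -> le6 A (mul6 A a c) (mul6 A b c).
Proof. intro E. pose proof H as H'. dflew H'. apply res. apply (fl_trans A H) with b; auto.
  apply res. apply (fl_refl A H); auto. Qed.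

Lemma fl_mono_r A (H : is_FLew A) a b c : le6 A a b -> le6 A (mul6 A c a) (mul6 A c b).
Proof. intro E. pose proof H as H'. dflew H'. rewrite (mC c a), (mC c b). apply (fl_mono_l A H); auto. Qed.

Lemma fl_mul_le_l A (H : is_FLew A) a b : le6 A (mul6 A a b) a.
Proof. pose proof H as H'. dflew H'. apply (fl_trans A H) with (mul6 A a (one6 A)); auto.
  apply (fl_mono_r A H); auto. rewrite m1. apply (fl_refl A H); auto. Qed.

Lemma fl_mul_le_r A (H : is_FLew A) a b : le6 A (mul6 A a b) b.
Proof. pose proof H as H'. dflew H'. rewrite mC. apply (fl_mul_le_l A H); auto. Qed.

Lemma fl_mp A (H : is_FLew A) b c : le6 A (mul6 A (imp6 A b c) b) c.
Proof. pose proof H as H'. dflew H'. apply res. apply (fl_refl A H); auto. Qed.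

Lemma fl_imp_one A (H : is_FLew A) y : imp6 A (one6 A) y = y.
Proof. pose proof H as H'. dflew H'. apply (fl_antisym A H); auto.
  - apply (fl_trans A H) with (mul6 A (imp6 A (one6 A) y) (one6 A)).
    rewrite m1. apply (fl_refl A H); auto. apply (fl_mp A H); auto.
  - apply res. rewrite m1. apply (fl_refl A H); auto. Qed.

Lemma fl_imp_self A (H : is_FLew A) y : imp6 A y y = one6 A.
Proof. pose proof H as H'. dflew H'. apply (fl_antisym A H); auto.
  apply res. apply (fl_mul_le_r A H); auto. Qed.

Lemma c_join_l A (H : is_FLew A) u a b d : le6 A (mul6 A u a) b ->
  le6 A (mul6 A u (join6 A a d)) (join6 A b d).
Proof. intro Hab. pose proof H as H'. dflew H'. rewrite mC. apply res. apply (fl_lub A H); auto.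
  - apply res. rewrite mC. apply (fl_trans A H) with b; auto. apply (fl_join_l A H); auto.
  - apply res. apply (fl_trans A H) with d. apply (fl_mul_le_l A H); auto. apply (fl_join_r A H); auto. Qed.

Lemma c_meet_l A (H : is_FLew A) u a b d : le6 A (mul6 A u a) b ->
  le6 A (mul6 A u (meet6 A a d)) (meet6 A b d).
Proof. intro Hab. apply (fl_glb A H); auto.
  - apply (fl_trans A H) with (mul6 A u a); auto. apply (fl_mono_r A H); auto. apply (fl_meet_l A H); auto.
  - apply (fl_trans A H) with (meet6 A a d). apply (fl_mul_le_r A H); auto. apply (fl_meet_r A H); auto. Qed.

Lemma c_mul_l A (H : is_FLew A) u a b d : le6 A (mul6 A u a) b ->
  le6 A (mul6 A u (mul6 A a d)) (mul6 A b d).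
Proof. intro Hab. pose proof H as H'. dflew H'. rewrite mA. apply (fl_mono_l A H); auto. Qed.

Lemma c_imp_l A (H : is_FLew A) u a b d : le6 A (mul6 A u b) a ->
  le6 A (mul6 A u (imp6 A a d)) (imp6 A b d).
Proof. intro Hba. pose proof H as H'. dflew H'. apply (proj1 (res _ _ _)).
  rewrite (mC u), <- mA. apply (fl_trans A H) with (mul6 A (imp6 A a d) a).
  apply (fl_mono_r A H); auto. apply (fl_mp A H); auto. Qed.

Lemma c_imp_r A (H : is_FLew A) u a b d : le6 A (mul6 A u a) b ->
  le6 A (mul6 A u (imp6 A d a)) (imp6 A d b).
Proof. intro Hab. pose proof H as H'. dflew H'. apply (proj1 (res _ _ _)).
  rewrite <- mA. apply (fl_trans A H) with (mul6 A u a); auto.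
  apply (fl_mono_r A H); auto. apply (fl_mp A H); auto. Qed.

Theorem lemma2p10 (V : Alg6 -> Prop)
  (HV : variety6 V) (HVsub : forall A, V A -> is_FLew A) :
  variety5 (zero_free_subreducts V).
Proof.
  destruct HV as [HH [HS HP]].
  split; [|split].
  - intros B C g [A [HA [f [Hf Hinj]]]] Hg Hsurj.
    pose proof (HVsub A HA) as FL.
    pose proof FL as FL'. dflew FL'.
    destruct Hf as (fj0 & fm0 & fmu0 & fi0 & f10).
    assert (fj : forall x y, f (join5 B x y) = join6 A (f x) (f y)) by exact fj0.
    assert (fm : forall x y, f (meet5 B x y) = meet6 A (f x) (f y)) by exact fm0.
    assert (fmu : forall x y, f (mul5 B x y) = mul6 A (f x) (f y)) by exact fmu0.
    assert (fi : forall x y, f (imp5 B x y) = imp6 A (f x) (f y)) by exact fi0.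
    assert (f1 : f (one5 B) = one6 A) by exact f10.
    clear fj0 fm0 fmu0 fi0 f10.
    destruct Hg as (gj & gm & gmu & gi & gone1).
    assert (B1 : mul5 B (one5 B) (one5 B) = one5 B).
    { apply Hinj. rewrite fmu, f1, m1. reflexivity. }
    assert (B2 : forall y, imp5 B y y = one5 B).
    { intro y. apply Hinj. rewrite fi, f1. apply (fl_imp_self A FL). }
    assert (B3 : forall y, imp5 B (one5 B) y = y).
    { intro y. apply Hinj. rewrite fi, f1. apply (fl_imp_one A FL). }
    assert (B4 : forall x y, meet5 B x y = meet5 B y x).
    { intros x y. apply Hinj. rewrite !fm. apply mc. }
    assert (gmul1 : mul5 C (one5 C) (one5 C) = one5 C).
    { rewrite <- gone1, <- gmu, B1. reflexivity. }
    set (R := fun x y : A => exists c : B, g c = one5 C /\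
                le6 A (mul6 A (f c) x) y /\ le6 A (mul6 A (f c) y) x).
    assert (Rr : forall a, R a a).
    { intro a. exists (one5 B). split; [exact gone1|].
      rewrite f1, mC, m1. split; apply (fl_refl A FL). }
    assert (Rs : forall a b, R a b -> R b a).
    { intros a b [c [H1 [H2 H3]]]. exists c. auto. }
    assert (Rt : forall a b d, R a b -> R b d -> R a d).
    { intros a b d [c1 [G1 [H1 H1']]] [c2 [G2 [H2 H2']]].
      exists (mul5 B c1 c2). split.
      - rewrite gmu, G1, G2. exact gmul1.
      - rewrite fmu. split.
        + rewrite (mC (f c1) (f c2)), <- mA.
          apply (fl_trans A FL) with (mul6 A (f c2) b); auto.
          apply (fl_mono_r A FL); auto.
        + rewrite <- mA.
          apply (fl_trans A FL) with (mul6 A (f c1) b); auto.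
          apply (fl_mono_r A FL); auto. }
    assert (Cj : forall a b a' b', R a b -> R a' b' -> R (join6 A a a') (join6 A b b')).
    { intros a b a' b' Hab Hab'. apply Rt with (join6 A b a').
      - destruct Hab as [c [G [H1 H2]]]. exists c. split; auto.
        split; apply (c_join_l A FL); auto.
      - destruct Hab' as [c [G [H1 H2]]]. exists c. split; auto.
        rewrite (jc b a'), (jc b b'). split; apply (c_join_l A FL); auto. }
    assert (Cm : forall a b a' b', R a b -> R a' b' -> R (meet6 A a a') (meet6 A b b')).
    { intros a b a' b' Hab Hab'. apply Rt with (meet6 A b a').
      - destruct Hab as [c [G [H1 H2]]]. exists c. split; auto.
        split; apply (c_meet_l A FL); auto.
      - destruct Hab' as [c [G [H1 H2]]]. exists c. split; auto.
        rewrite (mc b a'), (mc b b'). split; apply (c_meet_l A FL); auto. }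
    assert (Cu : forall a b a' b', R a b -> R a' b' -> R (mul6 A a a') (mul6 A b b')).
    { intros a b a' b' Hab Hab'. apply Rt with (mul6 A b a').
      - destruct Hab as [c [G [H1 H2]]]. exists c. split; auto.
        split; apply (c_mul_l A FL); auto.
      - destruct Hab' as [c [G [H1 H2]]]. exists c. split; auto.
        rewrite (mC b a'), (mC b b'). split; apply (c_mul_l A FL); auto. }
    assert (Ci : forall a b a' b', R a b -> R a' b' -> R (imp6 A a a') (imp6 A b b')).
    { intros a b a' b' Hab Hab'. apply Rt with (imp6 A b a').
      - destruct Hab as [c [G [H1 H2]]]. exists c. split; auto.
        split; apply (c_imp_l A FL); auto.
      - destruct Hab' as [c [G [H1 H2]]]. exists c. split; auto.
        split; apply (c_imp_r A FL); auto. }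
    assert (K : forall x y : B, g x = g y <-> R (f x) (f y)).
    { intros x y. split.
      - intro E. exists (mul5 B (imp5 B x y) (imp5 B y x)). split.
        + rewrite gmu, !gi, E, <- gi, B2, gone1. exact gmul1.
        + rewrite fmu, !fi. split.
          * apply (fl_trans A FL) with (mul6 A (imp6 A (f x) (f y)) (f x)).
            apply (fl_mono_l A FL). apply (fl_mul_le_l A FL). apply (fl_mp A FL).
          * apply (fl_trans A FL) with (mul6 A (imp6 A (f y) (f x)) (f y)).
            apply (fl_mono_l A FL). apply (fl_mul_le_r A FL). apply (fl_mp A FL).
      - intros [c [Gc [H1 H2]]].
        assert (e1 : meet5 B x (imp5 B c y) = x).
        { apply Hinj. rewrite fm, fi. apply (fl_le_meet A FL).
          apply (proj1 (res _ _ _)). rewrite mC. exact H1. }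
        assert (e2 : meet5 B y (imp5 B c x) = y).
        { apply Hinj. rewrite fm, fi. apply (fl_le_meet A FL).
          apply (proj1 (res _ _ _)). rewrite mC. exact H2. }
        transitivity (g (meet5 B x y)).
        + transitivity (g (meet5 B x (imp5 B c y))). rewrite e1; reflexivity.
          rewrite gm, gi, Gc, <- gone1, <- gi, <- gm, B3. reflexivity.
        + rewrite B4. transitivity (g (meet5 B y (imp5 B c x))).
          2: rewrite e2; reflexivity.
          symmetry. rewrite gm, gi, Gc, <- gone1, <- gi, <- gm, B3. reflexivity. }
    destruct (qalg_hom A R Rr Rs Rt Cj Cm Cu Ci) as [Hq Sq].
    set (Q := qalg A R).
    assert (HQ : V Q) by (apply (HH A Q (cls R)); auto).
    assert (pk : forall z : C, {x : B | g x = z}).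
    { intro z. apply constructive_indefinite_description. apply Hsurj. }
    set (h := fun z : C => (cls R (f (proj1_sig (pk z))) : reduct Q)).
    destruct Hq as (qj & qm & qu & qi & q0 & q1).
    assert (hE : forall x : B, h (g x) = cls R (f x)).
    { intro x. unfold h. apply cls_eq; auto. apply K.
      apply (proj2_sig (pk (g x))). }
    exists Q. split; [exact HQ|]. exists h. split.
    + assert (Ex : forall z, exists x, g x = z) by exact Hsurj.
      repeat split; [intros z w..|].
      * destruct (Ex z) as [x <-]. destruct (Ex w) as [y <-].
        rewrite <- gj, !hE, fj. apply qj.
      * destruct (Ex z) as [x <-]. destruct (Ex w) as [y <-].
        rewrite <- gm, !hE, fm. apply qm.
      * destruct (Ex z) as [x <-]. destruct (Ex w) as [y <-].
        rewrite <- gmu, !hE, fmu. apply qu.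
      * destruct (Ex z) as [x <-]. destruct (Ex w) as [y <-].
        rewrite <- gi, !hE, fi. apply qi.
      * rewrite <- gone1, hE, f1. exact q1.
    + intros z w E.
      destruct (Hsurj z) as [x <-]. destruct (Hsurj w) as [y <-].
      rewrite !hE in E. apply K. apply cls_inv; auto.
  - intros A B f [A0 [HA0 [h [Hh Hhi]]]] Hf Hfi.
    exists A0. split; [exact HA0|]. exists (fun x => h (f x)). split.
    + destruct Hh as (a1 & a2 & a3 & a4 & a5). destruct Hf as (b1 & b2 & b3 & b4 & b5).
      repeat split; intros; simpl.
      * rewrite b1; apply a1.
      * rewrite b2; apply a2.
      * rewrite b3; apply a3.
      * rewrite b4; apply a4.
      * rewrite b5; apply a5.
    + intros x y E. apply Hfi, Hhi, E.
  - intros I F HF.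
    assert (X : forall i, {A : Alg6 & {f : F i -> reduct A |
                  V A /\ hom5 (F i) (reduct A) f /\ injective f}}).
    { intro i. destruct (constructive_indefinite_description _ (HF i)) as [A [HA HE]].
      exists A. apply constructive_indefinite_description.
      destruct HE as [f Hf]. exists f. tauto. }
    set (G := fun i => projT1 (X i)).
    exists (prod6 I G). split.
    + apply HP. intro i. apply (proj1 (proj2_sig (projT2 (X i)))).
    + exists (fun (x : prod5 I F) (i : I) => proj1_sig (projT2 (X i)) (x i)).
      split.
      * repeat split; intros; simpl; apply functional_extensionality_dep; intro i;
          pose proof (proj2_sig (projT2 (X i))) as [_ [(h1&h2&h3&h4&h5) _]];
          first [apply h1|apply h2|apply h3|apply h4|apply h5].
      * intros x y E. apply functional_extensionality_dep; intro i.
        apply (f_equal (fun k => k i)) in E. simpl in E.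
        pose proof (proj2_sig (projT2 (X i))) as [_ [_ Hinj]]. apply Hinj, E.
Qed.
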